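(* Let $G\le\mathrm{O}(d)$ be finite, $z_1,\ldots,z_n\in\mathbb{R}^d$, $x\in\bigcap_{i=1}^nQ_{z_i}$, and $y\in\mathbb{R}^d$. Then: (a) for every $i\in\{1,\ldots,n\}$, the set $\arg\max_{p\in[z_i]}\langle p,x\rangle$ consists of a single element, denoted $v_i(x)$; (b) the set $\mathcal{F}(x,y)$ of functions $f:\{1,\ldots,n\}\to[y]$ satisfying $f(i)\in S(x,y)\cap\arg\max_{q\in[y]}\langle q,v_i(x)\rangle$ for all $i$ is nonempty.
   Context: For $x\in\mathbb{R}^d$, $[x]:=\{gx:g\in G\}$. The open Voronoi cell $V_x$ is the set of $y\in\mathbb{R}^d$ such that $x$ is the unique maximizer of $\langle p,y\rangle$ over $p\in[x]$; $Q_x:=\bigcup_{p\in[x]}V_p$. For $x,y\in\mathbb{R}^d$, $S(x,y):=\{q\in[y]:V_q\cap V_x\ne\varnothing\}$. *)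

(* Defs.v *)
From HB Require Import structures.
From mathcomp Require Import all_boot all_order all_algebra.
From mathcomp Require Import reals.
Set Implicit Arguments. Unset Strict Implicit. Unset Printing Implicit Defensive.
Import Order.TTheory GRing.Theory Num.Theory.
Local Open Scope ring_scope.

Section Defs.
Variables (R : realType) (d : nat).

Definition inner (u v : 'cV[R]_d) : R := \sum_(k < d) u k 0 * v k 0.

Definition is_finite_subgroup_O (G : seq 'M[R]_d) : Prop :=
  [/\ (1%:M \in G),
      (forall g h, g \in G -> h \in G -> g *m h \in G),
      (forall g, g \in G -> invmx g \in G) &
      (forall g, g \in G -> g *m g^T = 1%:M)].

Definition gorbit (G : seq 'M[R]_d) (x : 'cV[R]_d) : 'cV[R]_d -> Prop :=
  fun p => exists2 g, g \in G & p = g *m x.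

Definition argmax (A : 'cV[R]_d -> Prop) (f : 'cV[R]_d -> R) : 'cV[R]_d -> Prop :=
  fun p => A p /\ (forall q, A q -> f q <= f p).

(* open Voronoi cell V_x: x is the unique maximizer of <p,y> over p in [x] *)
Definition voronoi (G : seq 'M[R]_d) (x : 'cV[R]_d) : 'cV[R]_d -> Prop :=
  fun y => argmax (gorbit G x) (fun p => inner p y) x /\
           (forall p, argmax (gorbit G x) (fun p => inner p y) p -> p = x).

Definition Qset (G : seq 'M[R]_d) (x : 'cV[R]_d) : 'cV[R]_d -> Prop :=
  fun y => exists p, gorbit G x p /\ voronoi G p y.

Definition Sset (G : seq 'M[R]_d) (x y : 'cV[R]_d) : 'cV[R]_d -> Prop :=
  fun q => gorbit G y q /\ exists w, voronoi G q w /\ voronoi G x w.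

End Defs.

(* Main.v *)
Require Import Defs.
From HB Require Import structures.
From mathcomp Require Import all_boot all_order all_algebra.
From mathcomp Require Import reals.
From mathcomp Require Import ring lra.
From Stdlib Require Import IndefiniteDescription.
Set Implicit Arguments. Unset Strict Implicit. Unset Printing Implicit Defensive.
Import Order.TTheory GRing.Theory Num.Theory.
Local Open Scope ring_scope.

Section Aux.
Variables (R : realType) (d : nat).
Implicit Types u v w : 'cV[R]_d.

Lemma innerC u v : inner u v = inner v u.
Proof. by rewrite /inner; apply: eq_bigr => k _; rewrite mulrC. Qed.

Lemma innerBl u u' v : inner (u - u') v = inner u v - inner u' v.
Proof. rewrite /inner -sumrB; apply: eq_bigr => k _; rewrite !mxE; ring. Qed.

Lemma innerDr u v v' : inner u (v + v') = inner u v + inner u v'.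
Proof. rewrite /inner -big_split; apply: eq_bigr => k _ /=; rewrite !mxE; ring. Qed.

Lemma innerZr u a v : inner u (a *: v) = a * inner u v.
Proof. rewrite /inner mulr_sumr; apply: eq_bigr => k _ /=; rewrite !mxE; ring. Qed.

Lemma innerBr u v v' : inner u (v - v') = inner u v - inner u v'.
Proof. by rewrite innerC innerBl !(innerC u). Qed.

Lemma inner_mx u v : inner u v = (u^T *m v) 0 0.
Proof. by rewrite /inner !mxE; apply: eq_bigr => k _; rewrite !mxE. Qed.

Lemma inner_pos u : u != 0 -> 0 < inner u u.
Proof.
move=> /eqP nz.
have [k hk] : exists k, u k 0 != 0.
  apply/existsP; rewrite -negb_forall; apply/negP => /forallP H.
  apply: nz; apply/matrixP => i j; rewrite ord1 mxE; exact/eqP.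
rewrite /inner (bigD1 k) //=.
have : 0 <= \sum_(i < d | i != k) u i 0 * u i 0.
  by apply: sumr_ge0 => i _; rewrite -expr2 sqr_ge0.
have : 0 < u k 0 * u k 0 by rewrite -expr2 lt_def sqrf_eq0 hk sqr_ge0.
lra.
Qed.

Lemma gap (p q : 'cV[R]_d) : inner p p = inner q q -> p != q -> 0 < inner (p - q) p.
Proof.
move=> E ne; have nz : p - q != 0 by rewrite subr_eq0.
have := inner_pos nz.
rewrite !innerBl !innerBr (innerC q p) E; lra.
Qed.

Lemma eps1 (a b c : R) : 0 <= a -> (a = 0 -> 0 <= b) -> (a = 0 -> b = 0 -> 0 < c) ->
  exists2 e0, 0 < e0 & forall e, 0 < e -> e <= e0 -> 0 < a + e * b + e ^+ 2 * c.
Proof.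
move=> ha hb hc.
have hB := ler_norm b; have hB' := normr_ge0 b.
have hC := ler_norm c; have hC' := normr_ge0 c.
have nb : - `|b| <= b by rewrite lerNl -normrN ler_norm.
have nc : - `|c| <= c by rewrite lerNl -normrN ler_norm.
have [a0|a0] := eqVneq a 0.
  have hb' := hb a0; have [b0|b0] := eqVneq b 0.
    exists 1 => // e e0 _; rewrite a0 b0 mulr0 addr0 add0r; apply: mulr_gt0 (hc a0 b0); exact: exprn_gt0.
  have bp : 0 < b by rewrite lt_neqAle eq_sym b0.
  exists (Num.min 1 (b / (`|c| + 1))).
    by rewrite lt_min ltr01 divr_gt0 //; lra.
  move=> e e0; rewrite le_min => /andP[e1 e2].
  have : e * (`|c| + 1) <= b by rewrite -ler_pdivlMr //; lra.
  rewrite a0 expr2.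
  have h1 : 0 <= e * (c + `|c|) by apply: mulr_ge0; lra.
  nra.
have ap : 0 < a by rewrite lt_neqAle eq_sym a0.
exists (Num.min 1 (a / (`|b| + `|c| + 1))).
  by rewrite lt_min ltr01 divr_gt0 //; lra.
move=> e e0; rewrite le_min => /andP[e1 e2].
have : e * (`|b| + `|c| + 1) <= a by rewrite -ler_pdivlMr //; lra.
rewrite expr2.
have h1 : 0 <= e * (c + `|c|) by apply: mulr_ge0; lra.
have h2 : 0 <= e * (b + `|b|) by apply: mulr_ge0; lra.
have h3 : 0 <= e * (e * (c + `|c|))  by apply: mulr_ge0 => //; lra.
have h4 : 0 <= (1 - e) * (e * `|c|) by apply: mulr_ge0; [lra| apply: mulr_ge0; lra].
move=> h5.
have h6 : e * `|b| + e * `|c| + e <= a by lra.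
nra.
Qed.


Lemma epsl (T : eqType) (s : seq T) (P : pred T) (a b c : T -> R) :
 (forall t, t \in s -> P t -> [/\ 0 <= a t, (a t = 0 -> 0 <= b t) & (a t = 0 -> b t = 0 -> 0 < c t)]) ->
 exists2 e0, 0 < e0 & forall e, 0 < e -> e <= e0 -> forall t, t \in s -> P t -> 0 < a t + e * b t + e ^+ 2 * c t.
Proof.
elim: s => [|t s IH] H.
  by exists 1 => // e _ _ t; rewrite in_nil.
have [e1 e1p He1] : exists2 e0, 0 < e0 & forall e, 0 < e -> e <= e0 -> forall t', t' \in s -> P t' -> 0 < a t' + e * b t' + e ^+ 2 * c t'.
  by apply: IH => t' ht' Pt'; apply: H => //; rewrite in_cons ht' orbT.
have [Pt|nPt] := boolP (P t).
  have [] := H t (mem_head _ _) Pt => h1 h2 h3.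
  have [e2 e2p He2] := eps1 h1 h2 h3.
  exists (Num.min e1 e2); first by rewrite lt_min e1p e2p.
  move=> e ep; rewrite le_min => /andP[l1 l2] t'; rewrite in_cons => /orP[/eqP->|ht'] Pt'.
    exact: He2.
  exact: He1.
exists e1 => // e ep l t'; rewrite in_cons => /orP[/eqP->|ht'] Pt'.
  by rewrite Pt' in nPt.
exact: He1.
Qed.

Lemma lexmax (T : eqType) (s : seq T) (f1 f2 : T -> R) : s != [::] ->
  exists2 m, m \in s & forall q, q \in s -> f1 q <= f1 m /\ (f1 q = f1 m -> f2 q <= f2 m).
Proof.
elim: s => [//|t s IH] _.
have [->|ne] := eqVneq s [::].
  by exists t; rewrite ?mem_head // => q; rewrite in_cons in_nil orbF => /eqP->.
have [m ms Hm] := IH ne.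
have hd : forall m', (forall q, q \in s -> f1 q <= f1 m' /\ (f1 q = f1 m' -> f2 q <= f2 m')) ->
   f1 t <= f1 m' -> (f1 t = f1 m' -> f2 t <= f2 m') -> m' \in t :: s ->
   exists2 m, m \in t :: s & forall q, q \in t :: s -> f1 q <= f1 m /\ (f1 q = f1 m -> f2 q <= f2 m).
  move=> m' Hs h1 h2 hin; exists m' => // q; rewrite in_cons => /orP[/eqP->|]; first by split.
  exact: Hs.
case: (ltrgtP (f1 t) (f1 m)) => [lt|gt|eq].
- apply: hd Hm _ _ _; [lra| lra| by rewrite in_cons ms orbT].
- apply: (hd t); [ | exact: lexx | move=> _; exact: lexx | exact: mem_head].
  move=> q /Hm [h1 h2]; split; first lra.
  move=> E; lra.
- case: (lerP (f2 t) (f2 m)) => [le|lt].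
    apply: hd Hm _ _ _; [lra| by [] | by rewrite in_cons ms orbT].
  apply: (hd t); [ | exact: lexx | move=> _; exact: lexx | exact: mem_head].
  move=> q /Hm [h1 h2]; split; first lra.
  move=> E; have := h2 (etrans E eq). lra.
Qed.

Variable (G : seq 'M[R]_d).
Hypothesis HG : is_finite_subgroup_O G.

Lemma trG g : g \in G -> g^T \in G /\ g^T *m g = 1%:M.
Proof.
case: HG => H1 Hm Hi Ho gG.
have Hgg := Ho g gG.
have [gu _] := mulmx1_unit Hgg.
have E : invmx g = g^T.
  by rewrite -[invmx g]mulmx1 -Hgg mulmxA mulVmx // mul1mx.
by rewrite -E Hi //; split => //; rewrite mulVmx.
Qed.

Lemma inner_gl g u v : g \in G -> inner (g *m u) v = inner u (g^T *m v).
Proof. by move=> _; rewrite !inner_mx trmx_mul mulmxA. Qed.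

Lemma inner_g g u v : g \in G -> inner (g *m u) (g *m v) = inner u v.
Proof.
move=> gG; rewrite inner_gl // mulmxA (trG gG).2 mul1mx //.
Qed.

Lemma orbit_eq z p : gorbit G z p -> forall q, gorbit G p q <-> gorbit G z q.
Proof.
case: HG => H1 Hm Hi Ho [g gG ->] q; split.
  by case=> h hG ->; exists (h *m g); rewrite ?mulmxA ?Hm.
case=> k kG ->; have [tG tg] := trG gG.
exists (k *m g^T); first exact: Hm.
by rewrite mulmxA -(mulmxA k) tg mulmx1.
Qed.

Lemma orbit_norm z p : gorbit G z p -> inner p p = inner z z.
Proof. by case=> g gG ->; rewrite inner_g. Qed.

Lemma orbit_refl z : gorbit G z z.
Proof. by case: HG => H1 _ _ _; exists 1%:M; rewrite ?mul1mx. Qed.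

Lemma argmax_ext (A B : 'cV[R]_d -> Prop) f p : (forall q, A q <-> B q) -> argmax A f p <-> argmax B f p.
Proof.
move=> E; rewrite /argmax; split=> [[h1 h2]|[h1 h2]]; split.
- by apply/E.
- by move=> q /E; apply: h2.
- by apply/E.
- by move=> q /E; apply: h2.
Qed.

Lemma vor_of z p w : gorbit G z p ->
  (forall q, gorbit G z q -> q != p -> 0 < inner (p - q) w) -> voronoi G p w.
Proof.
move=> zp H.
have E := orbit_eq zp.
split.
  split; first exact: orbit_refl.
  move=> q /E zq; have [->|ne] := eqVneq q p; first exact: lexx.
  have := H q zq ne; rewrite innerBl; lra.
move=> q [/E zq Hq]; apply/eqP; apply/negPn/negP => ne.
have := H q zq ne; have := Hq p (orbit_refl p).
rewrite innerBl; lra.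
Qed.


Lemma partb x y v : (forall h, h \in G -> inner (h *m x) v <= inner x v) ->
  exists q, gorbit G y q /\ Sset G x y q /\ argmax (gorbit G y) (fun q => inner q v) q.
Proof.
move=> Hx.
set Y := [seq g *m y | g <- G].
have memY : forall q, gorbit G y q <-> q \in Y.
  by move=> q; split; [case=> g gG ->; apply: map_f | case/mapP=> g gG ->; exists g].
have Yne : Y != [::].
  apply/eqP => Y0; have : y \in Y by apply/memY/orbit_refl.
  by rewrite Y0.
have [q0 q0Y Hq0] := lexmax (fun q => inner q v) (fun q => inner q x) Yne.
have yq0 : gorbit G y q0 by apply/memY.
set X := [seq g *m x | g <- G].
destruct (@epsl _ X (fun q => q != x) (fun q => inner (x - q) v)
   (fun q => inner (x - q) x) (fun q => inner (x - q) q0)) as [e1 e1p He1].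
  move=> q /mapP[h hG ->] ne.
  have hn : inner x x = inner (h *m x) (h *m x) by rewrite inner_g.
  have := gap hn (_ : x != h *m x); rewrite eq_sym => /(_ ne) hg.
  split.
  - rewrite innerBl; have := Hx h hG; lra.
  - by move=> _; apply: ltW.
  - move=> _ b0; lra.
destruct (@epsl _ Y (fun q => q != q0) (fun q => inner (q0 - q) v)
   (fun q => inner (q0 - q) x) (fun q => inner (q0 - q) q0)) as [e2 e2p He2].
  move=> q qY ne; have [h1 h2] := Hq0 q qY.
  have hn : inner q0 q0 = inner q q.
    by rewrite (orbit_norm yq0) (orbit_norm (proj2 (memY q) qY)).
  have := gap hn (_ : q0 != q); rewrite eq_sym => /(_ ne) hg.
  split.
  - rewrite innerBl; lra.
  - rewrite !innerBl => a0; have E : inner q v = inner q0 v by lra.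
    have := h2 E; lra.
  - by move=> _ _.
set e := Num.min e1 e2.
have ep : 0 < e by rewrite lt_min e1p e2p.
have ee1 : e <= e1 by rewrite ge_min lexx.
have ee2 : e <= e2 by rewrite ge_min lexx orbT.
set w := v + e *: x + e^+2 *: q0.
have Ew : forall p, inner p w = inner p v + e * inner p x + e^+2 * inner p q0.
  by move=> p; rewrite /w !innerDr !innerZr.
exists q0; split => //; split; last first.
  split => // q /memY qY; exact: (Hq0 q qY).1.
split; first by []. 
exists w; split.
- apply: (vor_of yq0) => q /memY qY ne; rewrite Ew; exact: He2.
- apply: (vor_of (orbit_refl x)) => q [h hG ->] ne; rewrite Ew; apply: He1 => //.
  exact: map_f.
Qed.

End Aux.

Theorem corollary19 (R : realType) (d : nat) (G : seq 'M[R]_d)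
    (n : nat) (z : 'I_n -> 'cV[R]_d) (x y : 'cV[R]_d) :
  is_finite_subgroup_O G ->
  (forall i, Qset G (z i) x) ->
  (* (a) argmax_{p in [z_i]} <p,x> is a singleton {v_i(x)} *)
  (forall i, exists v, forall p,
      argmax (gorbit G (z i)) (fun p => inner p x) p <-> p = v) /\
  (* (b) with v i = v_i(x), the set F(x,y) is nonempty *)
  (forall v : 'I_n -> 'cV[R]_d,
      (forall i, argmax (gorbit G (z i)) (fun p => inner p x) (v i)) ->
      exists f : 'I_n -> 'cV[R]_d, forall i,
        gorbit G y (f i) /\ Sset G x y (f i) /\
        argmax (gorbit G y) (fun q => inner q (v i)) (f i)).
Proof.
move=> HG HQ; split.
  move=> i; have [p [zp vp]] := HQ i; exists p => q.
  rewrite (argmax_ext _ _ (fun r => iff_sym (orbit_eq HG zp r))).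
  split; first by apply: vp.2.
  by move=> ->; exact: vp.1.
move=> v Hv.
have H : forall i, exists q, gorbit G y q /\ Sset G x y q /\ argmax (gorbit G y) (fun q => inner q (v i)) q.
  move=> i; apply: partb => // h hG.
  have [[g gG vi] Hm] := Hv i.
  have [tG _] := trG HG hG.
  rewrite (inner_gl (G:=G)) // innerC (innerC x).
  apply: Hm; exists (h^T *m g); last by rewrite vi mulmxA.
  by case: HG => _ Hmul _ _; apply: Hmul.
exists (fun i => proj1_sig (constructive_indefinite_description _ (H i))).
move=> i; exact: (proj2_sig (constructive_indefinite_description _ (H i))).
Qed.
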